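(* Let $p,q\in[1,\infty)$. Without the Objectivity Assumption, the $L(p,q)$-aggregation method is not continuous as a function of the score vectors: there exist data (reviewers, papers, score vectors and recommendations satisfying the standing assumptions) such that, keeping all recommendations fixed, the map sending the score vectors $(\bar x_{ia})_{i,a}$ to the solution vector $(s_a)_{a\in\mathcal P}$ is discontinuous at these score vectors.
   Context: Peer-review setting: a finite set $\mathcal{R}$ of reviewers, a finite set $\mathcal{P}$ of papers, and $d\ge1$ criteria. Every reviewer $i$ reviews every paper $a$, giving a score vector $\bar{x}_{ia}\in[0,10]^d$ and a recommendation $y_{ia}\in[0,10]$. A function $h:[0,10]^d\to[0,10]$ is monotonic if $\bar x\le\bar y$ componentwise implies $h(\bar x)\le h(\bar y)$. Standing assumption: each reviewer $i$ has a monotonic $h_i$ with $y_{ia}=h_i(\bar x_{ia})$ for all $a$. Score vectors of different reviewers for the same paper may differ (no Objectivity Assumption). The $L(p,q)$-aggregation method: (1) ERM step: find a monotonic $\hat h$ minimizing $\big[\sum_{i\in\mathcal{R}}\big(\sum_{a\in\mathcal{P}}|y_{ia}-h(\bar x_{ia})|^p\big)^{q/p}\big]^{1/q}$ over monotonic $h$ (only the values $h(\bar x_{ia})$ matter); among minimizers the value vector $(\hat h(\bar x_{ia}))_{i,a}$ of smallest Euclidean norm is chosen; set $\hat y_{ia}=\hat h(\bar x_{ia})$. (2) Aggregation step: the solution $(s_a)_{a\in\mathcal P}$ minimizes $\big[\sum_{i}\big(\sum_{a}|\hat y_{ia}-s_a|^p\big)^{q/p}\big]^{1/q}$ (ties broken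 by smallest Euclidean norm). *)

(* Defs.v *)
From HB Require Import structures.
From mathcomp Require Import all_boot all_order all_algebra.
From mathcomp Require Import all_classical all_reals all_analysis.
From Stdlib Require Import ClassicalEpsilon.
Set Implicit Arguments. Unset Strict Implicit. Unset Printing Implicit Defensive.
Import Order.TTheory GRing.Theory Num.Theory.
Local Open Scope ring_scope.

Section PeerReview.
Variable R : realType.

(* Reviewers are 'I_m, papers 'I_n, criteria 'I_d.
   A score vector in [0,10]^d is a function 'I_d -> R with entries in [0,10]. *)
Definition in010 (v : R) : Prop := 0 <= v <= 10.
Definition in_box (d : nat) (u : 'I_d -> R) : Prop := forall k, in010 (u k).

Definition monotonic (d : nat) (h : ('I_d -> R) -> R) : Prop :=
  (forall u, in_box u -> in010 (h u)) /\
  (forall u v, in_box u -> in_box v -> (forall k, u k <= v k) -> h u <= h v).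

Definition scores_valid (m n d : nat) (x : 'I_m -> 'I_n -> 'I_d -> R) : Prop :=
  forall i a, in_box (x i a).

Definition standing_assumption (m n d : nat)
    (x : 'I_m -> 'I_n -> 'I_d -> R) (y : 'I_m -> 'I_n -> R) : Prop :=
  forall i, exists h, monotonic h /\ forall a, y i a = h (x i a).

Definition Lpq (m n : nat) (p q : R) (r : 'I_m -> 'I_n -> R) : R :=
  (\sum_(i < m) (\sum_(a < n) `|r i a| `^ p) `^ (q / p)) `^ (1 / q).

Definition sqnorm2 (m n : nat) (v : 'I_m -> 'I_n -> R) : R :=
  \sum_(i < m) \sum_(a < n) v i a ^+ 2.

Definition sqnorm1 (n : nat) (s : 'I_n -> R) : R := \sum_(a < n) s a ^+ 2.

Definition achievable (m n d : nat) (x : 'I_m -> 'I_n -> 'I_d -> R)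
    (v : 'I_m -> 'I_n -> R) : Prop :=
  exists h, monotonic h /\ forall i a, v i a = h (x i a).

Definition ERM_min (m n d : nat) (p q : R) (x : 'I_m -> 'I_n -> 'I_d -> R)
    (y v : 'I_m -> 'I_n -> R) : Prop :=
  achievable x v /\
  forall w, achievable x w -> Lpq p q (fun i a => y i a - v i a)
                            <= Lpq p q (fun i a => y i a - w i a).

Definition ERM_out (m n d : nat) (p q : R) (x : 'I_m -> 'I_n -> 'I_d -> R)
    (y yhat : 'I_m -> 'I_n -> R) : Prop :=
  ERM_min p q x y yhat /\
  forall w, ERM_min p q x y w -> sqnorm2 yhat <= sqnorm2 w.

Definition agg_min (m n : nat) (p q : R) (yhat : 'I_m -> 'I_n -> R)
    (s : 'I_n -> R) : Prop :=
  forall t : 'I_n -> R, Lpq p q (fun i a => yhat i a - s a)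
                        <= Lpq p q (fun i a => yhat i a - t a).

Definition agg_out (m n : nat) (p q : R) (yhat : 'I_m -> 'I_n -> R)
    (s : 'I_n -> R) : Prop :=
  agg_min p q yhat s /\ forall t, agg_min p q yhat t -> sqnorm1 s <= sqnorm1 t.

(* The L(p,q)-aggregation method as a function (the outputs of both steps are
   selected by Hilbert's epsilon; they are unique whenever they exist). *)
Definition Lpq_method (m n d : nat) (p q : R) (x : 'I_m -> 'I_n -> 'I_d -> R)
    (y : 'I_m -> 'I_n -> R) : 'I_n -> R :=
  let yhat := epsilon (inhabits (fun (_ : 'I_m) (_ : 'I_n) => (0 : R)))
                      (ERM_out p q x y) in
  epsilon (inhabits (fun (_ : 'I_n) => (0 : R))) (agg_out p q yhat).

End PeerReview.

(* Main.v *)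
Require Import Defs.
From HB Require Import structures.
From mathcomp Require Import all_boot all_order all_algebra.
From mathcomp Require Import all_classical all_reals all_analysis.
From mathcomp Require Import lra.
From Stdlib Require Import ClassicalEpsilon.
Import Order.TTheory GRing.Theory Num.Theory.
Local Open Scope ring_scope.

Section S.
Context {R : realType}.

Lemma mvt_pow (r a b : R) : 0 < a -> a < b ->
  exists2 c, a < c < b & b `^ r - a `^ r = r * c `^ (r - 1) * (b - a).
Proof.
move=> a0 ab.
have H : forall x, x \in `]a, b[ -> is_derive x 1 (@powR R ^~ r) (r * x `^ (r - 1)).
  move=> x; rewrite in_itv /= => /andP[ax _].
  exact: (@is_derive1_powR R r x (lt_trans a0 ax)).
have [|c] := MVT ab H.
  { apply: derivable_within_continuous; move=> x; rewrite in_itv /= => /andP[ax _].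
  have x0 : 0 < x by exact: lt_le_trans a0 ax.
  by apply: derivable_powR; rewrite in_itv /= andbT. }
rewrite in_itv /= => cab ->.
by exists c.
Qed.

Lemma strict_mid (r a b : R) : 1 < r -> 0 <= a -> a < b ->
  2 * ((a + b) / 2) `^ r < a `^ r + b `^ r.
Proof.
move=> r1 a0 ab.
have r0 : 0 < r by exact: lt_trans r1.
have b0 : 0 < b by exact: le_lt_trans a0 ab.
have r10 : 0 < r - 1 by rewrite subr_gt0.
rewrite le_eqVlt in a0; case/orP: a0 => [/eqP a0|a0].
- rewrite -a0 powR0 ?gt_eqF // add0r.
  rewrite powRM ?invr_ge0 ?ltW //.
  have h1 : 2^-1 `^ r < 2^-1.
    have -> : r = 1 + (r - 1) by rewrite addrC subrK.
    rewrite powRD; last by apply/implyP => _; rewrite invr_neq0.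
    rewrite powRr1 ?invr_ge0 //.
    rewrite -[X in _ < X]mulr1 ltr_pM2l ?invr_gt0 //.
    have one : (1:R) `^ (r - 1) = 1 by rewrite powR1.
    rewrite -[X in _ < X]one.
    apply: gt0_ltr_powR => //; rewrite ?nnegrE ?invr_ge0 //.
    by rewrite invf_lt1 // ltr1n.
  have bp : 0 < b `^ r by apply: powR_gt0.
  rewrite add0r mulrCA -[X in _ < X]mul1r.
  rewrite [X in _ < X]mulrC ltr_pM2l //; lra.
- set M := (a + b) / 2.
  have aM : a < M by rewrite /M; lra.
  have Mb : M < b by rewrite /M; lra.
  have [c1 /andP[ac1 c1M] e1] := mvt_pow r _ _ a0 aM.
  have [c2 /andP[Mc2 c2b] e2] := mvt_pow r _ _ (lt_trans a0 aM) Mb.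
  have c10 : 0 < c1 by exact: lt_trans ac1.
  have lt12 : c1 `^ (r - 1) < c2 `^ (r - 1).
    apply: gt0_ltr_powR => //; rewrite ?nnegrE ?ltW //.
      exact: lt_trans c10 (lt_trans c1M Mc2).
    exact: lt_trans c1M Mc2.
  have dM : M - a = b - M by rewrite /M; lra.
  have dpos : 0 < M - a by rewrite subr_gt0.
  suff : M `^ r - a `^ r < b `^ r - M `^ r by lra.
  rewrite e1 e2 -dM ltr_pM2r // ltr_pM2l //.
Qed.

Lemma conv2 (r a b : R) : 1 <= r -> 0 <= a -> 0 <= b ->
  2 * ((a + b) / 2) `^ r <= a `^ r + b `^ r.
Proof.
move=> r1 a0 b0.
rewrite le_eqVlt in r1; case/orP: r1 => [/eqP <-|r1].
  rewrite !powRr1 //; first lra.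
  by apply: divr_ge0 => //; apply: addr_ge0.
have [ab|ba|<-] := ltgtP a b.
- exact/ltW/strict_mid.
- by rewrite addrC [X in _ <= X]addrC; exact/ltW/strict_mid.
- have -> : (a + a) / 2 = a by lra.
  lra.
Qed.

Lemma powR_le_inv (r x y : R) : 0 < r -> 0 <= x -> 0 <= y ->
  x `^ r <= y `^ r -> x <= y.
Proof.
move=> r0 x0 y0 h; rewrite leNgt; apply/negP => yx.
have := gt0_ltr_powR r0 y0 x0 yx; rewrite ltNge h //.
Qed.

Lemma Lpq_ge0 {m n} {p q : R} {r : 'I_m -> 'I_n -> R} : 0 <= Lpq p q r.
Proof. exact: powR_ge0. Qed.

Lemma Lpq0 {m n} {p q : R} {r : 'I_m -> 'I_n -> R} : 0 < p -> 0 < q ->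
  (forall i a, r i a = 0) -> Lpq p q r = 0.
Proof.
move=> p0 q0 hr; rewrite /Lpq.
rewrite big1 ?powR0 //; first by rewrite gt_eqF // divr_gt0.
move=> i _; rewrite big1 ?powR0 //.
  by rewrite gt_eqF // divr_gt0.
by move=> a _; rewrite hr normr0 powR0 // gt_eqF.
Qed.

Lemma Lpq_eq0 {m n} {p q : R} {r : 'I_m -> 'I_n -> R} : 0 < p -> 0 < q ->
  Lpq p q r = 0 -> forall i a, r i a = 0.
Proof.
move=> p0 q0 /powR_eq0_eq0 /eqP; rewrite psumr_eq0; last first.
  by move=> i _; exact: powR_ge0.
move=> /allP H i a.
have /eqP := H i (mem_index_enum _); rewrite ?implyTb.
move=> /powR_eq0_eq0 /eqP; rewrite psumr_eq0; last first.
  by move=> j _; exact: powR_ge0.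
move=> /allP H2.
have /eqP := H2 a (mem_index_enum _); rewrite ?implyTb.
by move=> /powR_eq0_eq0 /normr0_eq0.
Qed.

Lemma ERM_exact m n d (p q : R) (x : 'I_m -> 'I_n -> 'I_d -> R) y :
  0 < p -> 0 < q -> achievable x y ->
  ERM_out p q x y y /\ forall w, ERM_out p q x y w -> w = y.
Proof.
move=> p0 q0 ay.
have zero : Lpq p q (fun i a => y i a - y i a) = 0.
  by apply: Lpq0 => // i a; rewrite subrr.
have eqy : forall w, ERM_min p q x y w -> w = y.
  move=> w [aw hw]; have := hw y ay; rewrite zero => h.
  have h0 : Lpq p q (fun i a => y i a - w i a) = 0.
    by apply/eqP; rewrite eq_le h Lpq_ge0.
  apply: funext => i; apply: funext => a.
  by have := Lpq_eq0 p0 q0 h0 i a => /eqP; rewrite subr_eq0 => /eqP.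
split.
  split; first by split; [exact: ay | move=> w _; rewrite zero; exact: Lpq_ge0].
  by move=> w /eqy ->.
by move=> w [/eqy].
Qed.

Lemma agg_rows m n (p q : R) (yhat : 'I_m -> 'I_n -> R) (s0 : 'I_n -> R) :
  (0 < m)%N -> 0 < p -> 0 < q -> (forall i a, yhat i a = s0 a) ->
  agg_out p q yhat s0 /\ forall s, agg_out p q yhat s -> s = s0.
Proof.
move=> m0 p0 q0 hy.
have zero : Lpq p q (fun i a => yhat i a - s0 a) = 0.
  by apply: Lpq0 => // i a; rewrite hy subrr.
have eqs : forall s, agg_min p q yhat s -> s = s0.
  move=> s hs; have := hs s0; rewrite zero => h.
  have h0 : Lpq p q (fun i a => yhat i a - s a) = 0.
    by apply/eqP; rewrite eq_le h Lpq_ge0.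
  apply: funext => a.
  by have := Lpq_eq0 p0 q0 h0 (Ordinal m0) a => /eqP; rewrite hy subr_eq0 => /eqP.
split.
  split; first by move=> t; rewrite zero Lpq_ge0.
  by move=> t /eqs ->.
by move=> s [/eqs].
Qed.

Lemma method_eq m n d (p q : R) (x : 'I_m -> 'I_n -> 'I_d -> R) y W s0 :
  (0 < m)%N -> 0 < p -> 0 < q ->
  ERM_out p q x y W -> (forall w, ERM_out p q x y w -> w = W) ->
  (forall i a, W i a = s0 a) -> Lpq_method p q x y = s0.
Proof.
move=> m0 p0 q0 EW Eu hW; rewrite /Lpq_method /=.
set yh := epsilon _ (ERM_out p q x y).
have Eyh : ERM_out p q x y yh by apply: epsilon_spec; exists W.
have := Eu _ Eyh => yhW.
have [A1 A2] := @agg_rows m n p q W s0 m0 p0 q0 hW.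
set s := epsilon _ (agg_out p q yh).
have Es : agg_out p q yh s by apply: epsilon_spec; exists s0; rewrite yhW.
by apply: A2; rewrite -yhW.
Qed.

Lemma ord2 (i : 'I_2) : i = ord0 \/ i = ord_max.
Proof.
case: i => [[|[|k]] Hk]; [left|right|]; try exact: val_inj.
by [].
Qed.

Definition Pv (e : R) : 'I_2 -> R := fun k => if k == ord0 then 10 - e else 0.
Definition Qv (e : R) : 'I_2 -> R := fun k => if k == ord0 then 0 else 10 - e.
Definition Xs (e : R) : 'I_2 -> 'I_2 -> 'I_2 -> R := fun i a =>
  if a == ord0 then (if i == ord0 then Pv e else Qv e)
  else (if i == ord0 then Qv 0 else Pv 0).
Definition Ys : 'I_2 -> 'I_2 -> R := fun i a => if a == ord0 then 0 else 10.

Lemma valid_X (e : R) : 0 <= e <= 10 -> scores_valid (Xs e).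
Proof.
move=> /andP[e0 e1] i a k; rewrite /in010 /Xs /Pv /Qv.
by repeat case: ifP => _; apply/andP; split; lra.
Qed.

Lemma dist_X (e : R) i a k : 0 <= e -> `|Xs e i a k - Xs 0 i a k| <= e.
Proof.
move=> e0; rewrite /Xs /Pv /Qv.
repeat case: ifP => _; rewrite ?subrr ?normr0 //;
  rewrite (_ : _ - _ = - e); try lra; rewrite normrN ger0_norm //.
Qed.

Definition hk (k : 'I_2) (u : 'I_2 -> R) : R := if 10 <= u k then 10 else 0.
Definition h2 (u : 'I_2 -> R) : R :=
  if (10 <= u ord0) || (10 <= u ord_max) then 10 else 0.

Lemma hk_mono k : monotonic (hk k).
Proof.
split.
  by move=> u _; rewrite /hk /in010; case: ifP => _; apply/andP; split; lra.
move=> u v _ _ uv; rewrite /hk.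
case: ifP => h1; case: ifP => h2 //; try lra.
by move: h2; rewrite (le_trans h1 (uv k)).
Qed.

Lemma h2_mono : monotonic h2.
Proof.
split.
  by move=> u _; rewrite /h2 /in010; case: ifP => _; apply/andP; split; lra.
move=> u v _ _ uv; rewrite /h2.
case: ifP => H1; case: ifP => H2 //; try lra.
move: H2; case/orP: H1 => H1.
  by rewrite (le_trans H1 (uv ord0)).
by rewrite (le_trans H1 (uv ord_max)) orbT.
Qed.

Lemma ach_pos (e : R) : 0 < e -> achievable (Xs e) Ys.
Proof.
move=> e0; exists h2; split; first exact: h2_mono.
move=> i a; rewrite /Ys /Xs /h2 /Pv /Qv.
have [->|->] := ord2 a; have [->|->] := ord2 i => /=;
  repeat case: ifP => //; lra.
Qed.

Lemma stand0 : standing_assumption (Xs 0) Ys.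
Proof.
move=> i; have [->|->] := ord2 i.
- exists (hk ord_max); split; first exact: hk_mono.
  move=> a; rewrite /Ys /Xs /hk /Pv /Qv.
  have [->|->] := ord2 a => /=; repeat case: ifP => //; lra.
- exists (hk ord0); split; first exact: hk_mono.
  move=> a; rewrite /Ys /Xs /hk /Pv /Qv.
  have [->|->] := ord2 a => /=; repeat case: ifP => //; lra.
Qed.
End S.

Section S2.
Context {R : realType}.
Implicit Types (p q a b A B c t : R).
Lemma sum2 (F : 'I_2 -> R) : \sum_(i < 2) F i = F ord0 + F ord_max.
Proof. by rewrite big_ord_recr big_ord1 /=; congr (F _ + _); apply: val_inj. Qed.

Lemma Lpq2 (p q : R) (r : 'I_2 -> 'I_2 -> R) : Lpq p q r =
  ((`|r ord0 ord0| `^ p + `|r ord0 ord_max| `^ p) `^ (q / p) +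
   (`|r ord_max ord0| `^ p + `|r ord_max ord_max| `^ p) `^ (q / p)) `^ (1 / q).
Proof. by rewrite /Lpq !sum2. Qed.

Lemma sq2 (v : 'I_2 -> 'I_2 -> R) : sqnorm2 v =
  v ord0 ord0 ^+ 2 + v ord0 ord_max ^+ 2 + (v ord_max ord0 ^+ 2 + v ord_max ord_max ^+ 2).
Proof. by rewrite /sqnorm2 !sum2. Qed.

Lemma shape (v : 'I_2 -> 'I_2 -> R) : achievable (Xs 0) v ->
  exists A B, [/\ 0 <= A <= 10, 0 <= B <= 10,
    v ord0 ord0 = A /\ v ord_max ord_max = A & v ord0 ord_max = B /\ v ord_max ord0 = B].
Proof.
move=> [h [[hr _] hv]].
have V := @valid_X R 0 ltac:(apply/andP; split; lra).
exists (h (Pv 0)), (h (Qv 0)); split.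
- exact: (hr _ (V ord0 ord0)).
- exact: (hr _ (V ord0 ord_max)).
- by rewrite !hv.
- by rewrite !hv.
Qed.

Lemma const_ach (c : R) : 0 <= c <= 10 -> achievable (Xs 0) (fun _ _ => c).
Proof.
move=> c0; exists (fun _ => c); split => //; split => // u v _ _ _.
Qed.

Definition N (p q a b : R) := (a `^ p + b `^ p) `^ (q / p).
Definition G (p q a b : R) := 2 `^ (q / p) * ((a + b) / 2) `^ q.

Lemma core (p q t : R) : 0 < p -> 0 <= t ->
  (2 * t `^ p) `^ (q / p) = 2 `^ (q / p) * t `^ q.
Proof.
move=> p0 t0; rewrite powRM ?powR_ge0 //; congr (_ * _).
by rewrite -powRrM mulrC divfK // gt_eqF.
Qed.

Lemma Nlow (p q a b : R) : 1 <= p -> 0 < q -> 0 <= a -> 0 <= b -> G p q a b <= N p q a b.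
Proof.
move=> p1 q0 a0 b0; have p0 : 0 < p by lra.
have hab : 0 <= (a + b) / 2 by apply: divr_ge0 => //; apply: addr_ge0.
rewrite /G /N -(@core p q _ p0 hab).
apply: ge0_ler_powR; rewrite ?nnegrE.
- by apply: divr_ge0; lra.
- by apply: mulr_ge0 => //; apply: powR_ge0.
- by apply: addr_ge0; apply: powR_ge0.
- exact: conv2.
Qed.

Lemma Nlow_strict (p q a b : R) : 1 < p -> 0 < q -> 0 <= a -> 0 <= b -> a != b ->
  G p q a b < N p q a b.
Proof.
move=> p1 q0 a0 b0 ab; have p0 : 0 < p by lra.
have hab : 0 <= (a + b) / 2 by apply: divr_ge0 => //; apply: addr_ge0.
rewrite /G /N -(@core p q _ p0 hab).
apply: gt0_ltr_powR; rewrite ?nnegrE.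
- by apply: divr_gt0.
- by apply: mulr_ge0 => //; apply: powR_ge0.
- by apply: addr_ge0; apply: powR_ge0.
- case: (ltgtP a b) ab => // H _.
    exact: strict_mid.
  by rewrite addrC [X in _ < X]addrC; exact: strict_mid.
Qed.

Lemma Neq (p q a : R) : 0 < p -> 0 <= a -> N p q a a = G p q a a.
Proof.
move=> p0 a0; rewrite /N /G.
have -> : (a + a) / 2 = a by lra.
rewrite -(@core p q _ p0 a0); congr (_ `^ _); lra.
Qed.

Lemma K1 (p q A B : R) : 1 <= p -> 1 <= q -> 0 <= A <= 10 -> 0 <= B <= 10 ->
  2 * N p q 5 5 <= N p q A (10 - B) + N p q B (10 - A).
Proof.
move=> p1 q1 /andP[A0 A1] /andP[B0 B1]; have p0 : 0 < p by lra.
have q0 : 0 < q by lra.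
apply: (@le_trans _ _ (G p q A (10 - B) + G p q B (10 - A))); last first.
  by apply: lerD; apply: Nlow => //; lra.
have e5 : (0:R) <= 5 by lra.
rewrite (@Neq p q 5 p0 e5).
rewrite /G -mulrDr mulrCA ler_pM2l; last by apply: powR_gt0.
have hu : 0 <= (A + (10 - B)) / 2 by lra.
have hw : 0 <= (B + (10 - A)) / 2 by lra.
have := @conv2 R q _ _ q1 hu hw.
by have -> : ((A + (10 - B)) / 2 + (B + (10 - A)) / 2) / 2 = (5 + 5) / 2 by lra.
Qed.

Lemma K3 (p q A B : R) : 1 < p -> 1 <= q -> 0 <= A <= 10 -> 0 <= B <= 10 ->
  A + B != 10 ->
  2 * N p q 5 5 < N p q A (10 - B) + N p q B (10 - A).
Proof.
move=> p1 q1 /andP[A0 A1] /andP[B0 B1] AB; have p0 : 0 < p by lra.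
have q0 : 0 < q by lra.
apply: (@le_lt_trans _ _ (G p q A (10 - B) + G p q B (10 - A))).
  have e5 : (0:R) <= 5 by lra.
rewrite (@Neq p q 5 p0 e5).
  rewrite /G -mulrDr mulrCA ler_pM2l; last by apply: powR_gt0.
  have hu : 0 <= (A + (10 - B)) / 2 by lra.
  have hw : 0 <= (B + (10 - A)) / 2 by lra.
  have := @conv2 R q _ _ q1 hu hw.
  by have -> : ((A + (10 - B)) / 2 + (B + (10 - A)) / 2) / 2 = (5 + 5) / 2 by lra.
have ne : A != 10 - B.
  by apply/eqP => H; move/eqP: AB; apply; lra.
have hB : 0 <= 10 - B by lra.
have hA : 0 <= 10 - A by lra.
apply: ltr_leD.
  exact: (@Nlow_strict p q A (10 - B) p1 q0 A0 hB ne).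
have p1' : 1 <= p by lra.
exact: (@Nlow p q B (10 - A) p1' q0 B0 hA).
Qed.

Lemma K2 (q : R) : N 1 q 0 10 = N 1 q 5 5.
Proof.
rewrite /N !powRr1 //; try lra.
by congr (_ `^ _); lra.
Qed.
End S2.

Section S3.
Context {R : realType}.

Lemma loss_shape (p q : R) {A B : R} {v : 'I_2 -> 'I_2 -> R} :
  0 <= A <= 10 -> 0 <= B <= 10 ->
  v ord0 ord0 = A -> v ord_max ord_max = A -> v ord0 ord_max = B -> v ord_max ord0 = B ->
  Lpq p q (fun i a => Ys i a - v i a) = (N p q A (10 - B) + N p q B (10 - A)) `^ (1 / q).
Proof.
move=> /andP[A0 A1] /andP[B0 B1] e1 e2 e3 e4.
rewrite Lpq2 /Ys /= e1 e2 e3 e4 /N.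
have hA : 0 <= 10 - A by lra.
have hB : 0 <= 10 - B by lra.
by rewrite !sub0r !normrN (ger0_norm A0) (ger0_norm B0) (ger0_norm hA) (ger0_norm hB).
Qed.

Lemma powq_le {q S1 S2 : R} : 0 < q -> 0 <= S1 -> 0 <= S2 ->
  (S1 `^ (1 / q) <= S2 `^ (1 / q)) = (S1 <= S2).
Proof.
move=> q0 s1 s2; have r0 : 0 < 1 / q by apply: divr_gt0.
apply/idP/idP.
  exact: powR_le_inv r0 s1 s2.
by move=> h; apply: ge0_ler_powR => //; apply: ltW.
Qed.

Lemma N_ge0 (p q a b : R) : 0 <= N p q a b.
Proof. exact: powR_ge0. Qed.

Lemma sqnorm2_ge0 (v : 'I_2 -> 'I_2 -> R) : 0 <= sqnorm2 v.
Proof. by rewrite sq2; apply: addr_ge0; apply: addr_ge0; apply: sqr_ge0. Qed.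

Lemma funext2 (v w : 'I_2 -> 'I_2 -> R) :
  v ord0 ord0 = w ord0 ord0 -> v ord0 ord_max = w ord0 ord_max ->
  v ord_max ord0 = w ord_max ord0 -> v ord_max ord_max = w ord_max ord_max -> v = w.
Proof.
move=> h1 h2 h3 h4; apply: funext => i; apply: funext => a.
by have [->|->] := ord2 i; have [->|->] := ord2 a.
Qed.


Lemma dbl_le (z : R) : z + z <= 2 * z.
Proof. lra. Qed.

Lemma lossW (p q : R) {c : R} : 0 <= c <= 10 ->
  Lpq p q (fun i a => Ys i a - (fun _ _ => c) i a) =
  (N p q c (10 - c) + N p q c (10 - c)) `^ (1 / q).
Proof. by move=> hc; exact: (loss_shape p q hc hc erefl erefl erefl erefl). Qed.

Lemma ERM_p1 (q : R) : 1 <= q ->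
  ERM_out 1 q (Xs 0) Ys (fun _ _ => 0) /\
  forall w, ERM_out 1 q (Xs 0) Ys w -> w = (fun _ _ => 0).
Proof.
move=> q1; have q0 : 0 < q by lra.
have p1 : (1:R) <= 1 by lra.
have c0 : 0 <= (0:R) <= 10 by apply/andP; split; lra.
have MW : ERM_min 1 q (Xs 0) Ys (fun _ _ => 0).
  split; first exact: const_ach.
  move=> w /shape [A [B [hA hB [e1 e2] [e3 e4]]]].
  rewrite (lossW 1 q c0) (loss_shape 1 q hA hB e1 e2 e3 e4).
  rewrite (powq_le q0 (addr_ge0 (N_ge0 _ _ _ _) (N_ge0 _ _ _ _)) (addr_ge0 (N_ge0 _ _ _ _) (N_ge0 _ _ _ _))).
  rewrite subr0 K2.
  exact: (le_trans (dbl_le _) (@K1 R 1 q A B p1 q1 hA hB)).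
have n0 : sqnorm2 (fun _ _ : 'I_2 => (0:R)) = 0.
  by rewrite sq2 expr0n /=; lra.
split.
  by split; [exact: MW | move=> w _; rewrite n0; exact: sqnorm2_ge0].
move=> w [[aw _] Nw].
have := Nw _ MW; rewrite n0.
have [A [B [hA hB [e1 e2] [e3 e4]]]] := shape _ aw.
rewrite sq2 e1 e2 e3 e4 => hn.
have A0 : A = 0 by nra.
have B0 : B = 0 by nra.
by apply: funext2; rewrite ?e1 ?e2 ?e3 ?e4.
Qed.

Lemma ERM_pgt1 (p q : R) : 1 < p -> 1 <= q ->
  ERM_out p q (Xs 0) Ys (fun _ _ => 5) /\
  forall w, ERM_out p q (Xs 0) Ys w -> w = (fun _ _ => 5).
Proof.
move=> p1 q1; have q0 : 0 < q by lra.
have p1' : 1 <= p by lra.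
have c5 : 0 <= (5:R) <= 10 by apply/andP; split; lra.
have E5 : (10 - 5 : R) = 5 by lra.
have MW : ERM_min p q (Xs 0) Ys (fun _ _ => 5).
  split; first exact: const_ach.
  move=> w /shape [A [B [hA hB [e1 e2] [e3 e4]]]].
  rewrite (lossW p q c5) (loss_shape p q hA hB e1 e2 e3 e4).
  rewrite (powq_le q0 (addr_ge0 (N_ge0 _ _ _ _) (N_ge0 _ _ _ _)) (addr_ge0 (N_ge0 _ _ _ _) (N_ge0 _ _ _ _))).
  rewrite E5.
  exact: (le_trans (dbl_le _) (@K1 R p q A B p1' q1 hA hB)).
have n5 : sqnorm2 (fun _ _ : 'I_2 => (5:R)) = 100.
  by rewrite sq2 /=; lra.
have key : forall w, ERM_min p q (Xs 0) Ys w -> exists A B,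
    [/\ A + B = 10, sqnorm2 w = A ^+ 2 + B ^+ 2 + (B ^+ 2 + A ^+ 2) &
     w = (fun i a => if (i == ord0) == (a == ord0) then A else B)].
  move=> w [aw hw].
  have [A [B [hA hB [e1 e2] [e3 e4]]]] := shape _ aw.
  exists A, B; split.
  - have := hw _ (const_ach _ c5).
    rewrite (lossW p q c5) (loss_shape p q hA hB e1 e2 e3 e4).
    rewrite (powq_le q0 (addr_ge0 (N_ge0 _ _ _ _) (N_ge0 _ _ _ _)) (addr_ge0 (N_ge0 _ _ _ _) (N_ge0 _ _ _ _))).
    rewrite E5 => h.
    have [//|ne] := eqVneq (A + B) 10.
    have := lt_le_trans (@K3 R p q A B p1 q1 hA hB ne) (le_trans h (dbl_le _)).
    by rewrite ltxx.
  - by rewrite sq2 e1 e2 e3 e4.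
  - by apply: funext2; rewrite ?e1 ?e2 ?e3 ?e4.
split.
  split; first exact: MW.
  move=> w /key [A [B [AB -> _]]]; rewrite n5.
  have -> : B = 10 - A by lra.
  have := sqr_ge0 (A - 5); nra.
move=> w [/key [A [B [AB nw ew]]] Nw].
have := Nw _ MW; rewrite n5 nw => hn.
have eB : B = 10 - A by lra.
move: hn; rewrite eB => hn.
have := sqr_ge0 (A - 5) => hs.
have A5 : A = 5 by nra.
have B5 : B = 5 by lra.
rewrite ew; apply: funext2; rewrite /= ?A5 ?B5 //.
Qed.
End S3.

Theorem theorem4p5 (R : realType) (p q : R) :
  1 <= p -> 1 <= q ->
  exists (m n d : nat) (x : 'I_m -> 'I_n -> 'I_d -> R) (y : 'I_m -> 'I_n -> R),
    [/\ [&& 0 < m, 0 < n & 0 < d]%N,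
        scores_valid x,
        standing_assumption x y &
        (* the map x' |-> Lpq_method p q x' y (y fixed) is not continuous at x *)
        (exists2 eps : R, 0 < eps &
          forall delta : R, 0 < delta ->
            exists x' : 'I_m -> 'I_n -> 'I_d -> R,
              [/\ scores_valid x',
                  standing_assumption x' y,
                  (forall i a k, `|x' i a k - x i a k| < delta) &
                  (exists a, eps <= `|Lpq_method p q x' y a - Lpq_method p q x y a|) ])].
Proof.
move=> p1 q1.
have p0 : 0 < p by lra.
have q0 : 0 < q by lra.
have m0 : (0 < 2)%N by [].
exists 2%N, 2%N, 2%N, (Xs 0), Ys.
have [c [Mc c5]] : exists c : R,
    Lpq_method p q (Xs 0) Ys = (fun _ => c) /\ c <= 5.
  case: (eqVneq p 1) => [pe|pn1].
    exists 0; split; last lra.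
    have [E1 E2] := @ERM_p1 R q q1.
    rewrite pe in p0 *.
    by apply: (@method_eq R _ _ _ _ _ _ _ _ _ m0 p0 q0 E1 E2) => i a.
  have pg : 1 < p by rewrite lt_neqAle eq_sym pn1 p1.
  exists 5; split; last lra.
  have [E1 E2] := @ERM_pgt1 R p q pg q1.
  by apply: (@method_eq R _ _ _ _ _ _ _ _ _ m0 p0 q0 E1 E2) => i a.
split.
- by [].
- by apply: valid_X; apply/andP; split; lra.
- exact: stand0.
- exists 5; first lra.
  move=> delta d0.
  pose e := Num.min (delta / 2) 1.
  have e0 : 0 < e by rewrite /e lt_min; apply/andP; split; lra.
  have e1 : e <= 1 by rewrite /e ge_min; apply/orP; right; lra.
  have ed : e < delta.
    by apply: (le_lt_trans (_ : e <= delta / 2)); [rewrite /e ge_min lexx | lra].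
  exists (Xs e); split.
  + by apply: valid_X; apply/andP; split; lra.
  + move=> i; have [h [hm hv]] := @ach_pos R e e0.
    by exists h; split; [exact: hm | move=> a; exact: hv].
  + move=> i a k; exact: (le_lt_trans (@dist_X R e i a k (ltW e0)) ed).
  + exists ord_max.
    have [E1 E2] := @ERM_exact R _ _ _ p q (Xs e) Ys p0 q0 (@ach_pos R e e0).
    have M' : Lpq_method p q (Xs e) Ys = (fun a => Ys ord0 a).
      by apply: (@method_eq R _ _ _ _ _ _ _ _ _ m0 p0 q0 E1 E2) => i a.
    rewrite M' Mc /Ys /=.
    rewrite ger0_norm; lra.
Qed.
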